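(* Let $d \ge 1$ and $\rho \ge 0$ be integers. For every collection of $\rho$ pairwise incomparable points $r^{(1)}, \dots, r^{(\rho)} \in (0,1)^d$ whose $d\rho$ coordinates are all distinct, the number $\gamma$ of generators of their record-setting region satisfies $\gamma \ge (d-1)\rho + 1$. Moreover, for every $d\ge 1$ and $\rho \ge 0$ for which such a collection of $\rho$ points exists, there is such a collection with $\gamma = (d-1)\rho + 1$; thus $(d-1)\rho+1$ is the smallest possible number of generators.
   Context: For $x,y \in \mathbb{R}^d$, $x \prec y$ means $x_j < y_j$ for all $j \in [d]$, and $x \le y$ means $x_j \le y_j$ for all $j$; points are incomparable if neither is $\le$ the other. The record-setting region of points $r^{(1)},\dots,r^{(\rho)}$ is $S := \{x \in [0,1)^d : x \not\prec r^{(i)} \text{ for all } i \in [\rho]\}$ (so for $\rho=0$, $S=[0,1)^d$), and its generators are the minimal elements of $S$ with respect to $\le$. *)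

(* Defs.v *)
From HB Require Import structures.
From mathcomp Require Import all_boot all_order all_algebra.
Set Implicit Arguments. Unset Strict Implicit. Unset Printing Implicit Defensive.
Import Order.TTheory GRing.Theory Num.Theory.
Local Open Scope ring_scope.

Section RecordRegion.
Variables (R : realFieldType) (d rho : nat).
Notation pt := {ffun 'I_d -> R}.

Definition vlt (x y : pt) : bool := [forall j, x j < y j].
Definition vle (x y : pt) : bool := [forall j, x j <= y j].

Definition in_region (r : 'I_rho -> pt) (x : pt) : bool :=
  [forall j, (0 <= x j) && (x j < 1)] && [forall i, ~~ vlt x (r i)].

Definition is_generator (r : 'I_rho -> pt) (x : pt) : Prop :=
  in_region r x /\ (forall y, in_region r y -> vle y x -> y = x).

Definition admissible (r : 'I_rho -> pt) : Prop :=
  (forall i j, 0 < r i j /\ r i j < 1) /\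
  (forall i i', i != i' -> ~~ vle (r i) (r i')) /\
  injective (fun p : 'I_rho * 'I_d => r p.1 p.2).

Definition num_generators (r : 'I_rho -> pt) (g : nat) : Prop :=
  exists s : seq pt, [/\ uniq s, (forall x, x \in s <-> is_generator r x)
                       & size s = g].
End RecordRegion.

(* Main.v *)
Require Import Defs.
From HB Require Import structures.
From mathcomp Require Import all_boot all_order all_algebra zify.
Import Order.TTheory GRing.Theory Num.Theory.
Set Implicit Arguments. Unset Strict Implicit. Unset Printing Implicit Defensive.
Local Open Scope ring_scope.

Section MX.
Variable R : realFieldType.
Variable P : pred R.
Definition mxf (s : seq R) : R :=
  foldr (fun c m => if P c && (m < c) then c else m) 0 s.
Lemma mxf_ge0 s : 0 <= mxf s.
Proof.
elim: s => [|a s IH] //=; case: ifP => // /andP[_ h]; exact: le_trans IH (ltW h).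
Qed.
Lemma mxf_mem s : mxf s \in 0 :: s.
Proof.
elim: s => [|a s IH] /=; first by rewrite mem_head.
case: ifP => _; first by rewrite !inE eqxx orbT.
move: IH; rewrite !inE => /orP[->//|->]; by rewrite !orbT.
Qed.
Lemma mxf_P s : mxf s = 0 \/ P (mxf s).
Proof.
elim: s => [|a s IH] /=; first by left.
by case: ifP => [/andP[-> _]|_]; [right|].
Qed.
Lemma mxf_ub s c : c \in s -> P c -> c <= mxf s.
Proof.
elim: s => [|a s IH] //=; rewrite inE => /orP[/eqP ->|cs] Pc.
  case: ifP => [_|]; first by [].
  by rewrite Pc /= => /negbT; rewrite -leNgt.
case: ifP => [/andP[_ h]|_]; last exact: IH.
exact: le_trans (IH cs Pc) (ltW h).
Qed.
End MX.

Lemma minseq (T : eqType) (R : realFieldType) (w : T -> R) (s : seq T) a0 :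
  a0 \in s -> exists2 a, a \in s & forall b, b \in s -> w a <= w b.
Proof.
elim: s a0 => [|x s IH] //= a0 _.
case: s IH => [|y s] IH.
  by exists x; rewrite ?mem_head // => b; rewrite inE => /eqP ->.
have [a aS aM] := IH _ (mem_head _ _).
case: (leP (w x) (w a)) => h.
  exists x; first by rewrite mem_head.
  move=> b; rewrite inE => /orP[/eqP ->//|/aM]; exact: le_trans.
exists a; first by rewrite inE aS orbT.
move=> b; rewrite inE => /orP[/eqP ->|/aM//]; exact: ltW.
Qed.
Section Gen.
Variables (R : realFieldType) (d rho : nat) (r : 'I_rho -> {ffun 'I_d -> R}).
Local Notation pt := {ffun 'I_d -> R}.

Definition inS (T : {set 'I_rho}) (x : pt) : bool :=
  [forall j, (0 <= x j) && (x j < 1)] && [forall i in T, ~~ vlt x (r i)].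
Definition genP T x : Prop := inS T x /\ forall y, inS T y -> vle y x -> y = x.

Lemma vleP (x y : pt) : reflect (forall j, x j <= y j) (vle x y).
Proof. exact: forallP. Qed.
Lemma vltP (x y : pt) : reflect (forall j, x j < y j) (vlt x y).
Proof. exact: forallP. Qed.
Lemma vle_anti (x y : pt) : vle x y -> vle y x -> x = y.
Proof.
move=> /vleP h1 /vleP h2; apply/ffunP => j; apply/le_anti; by rewrite h1 h2.
Qed.
Lemma vle_trans (x y z : pt) : vle x y -> vle y z -> vle x z.
Proof. move=> /vleP h1 /vleP h2; apply/vleP => j; exact: le_trans (h1 j) (h2 j). Qed.
Lemma vle_refl (x : pt) : vle x x.
Proof. by apply/vleP. Qed.

Lemma inSP (T : {set 'I_rho}) (x : pt) : reflect ((forall j, 0 <= x j /\ x j < 1) /\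
    (forall i, i \in T -> ~~ vlt x (r i))) (inS T x).
Proof.
apply: (iffP andP) => [[/forallP h1 /forall_inP h2]|[h1 h2]]; split.
- by move=> j; case/andP: (h1 j).
- exact: h2.
- by apply/forallP => j; case: (h1 j) => -> ->.
- exact/forall_inP.
Qed.

Definition C (T : {set 'I_rho}) (j : 'I_d) : seq R := 0 :: [seq r i j | i <- enum T].
Lemma C_r (T : {set 'I_rho}) i j : i \in T -> r i j \in C T j.
Proof. by move=> iT; rewrite inE; apply/orP; right; apply: map_f; rewrite mem_enum. Qed.
Lemma C_0 (T : {set 'I_rho}) j : 0 \in C T j.
Proof. exact: mem_head. Qed.

Definition fl (T : {set 'I_rho}) (x : pt) : pt := [ffun j => mxf (fun c => c <= x j) (C T j)].

Lemma fl_C (T : {set 'I_rho}) (x : pt) j : fl T x j \in C T j.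
Proof.
rewrite ffunE; have := mxf_mem (fun c => c <= x j) (C T j).
by rewrite inE => /orP[/eqP ->|//]; exact: C_0.
Qed.

Lemma fl_le (T : {set 'I_rho}) (x : pt) : (forall j, 0 <= x j) -> vle (fl T x) x.
Proof.
move=> h; apply/vleP => j; rewrite ffunE.
by case: (mxf_P (fun c => c <= x j) (C T j)) => [->|].
Qed.

Lemma fl_inS (T : {set 'I_rho}) (x : pt) : inS T x -> inS T (fl T x).
Proof.
move=> /inSP[hb hr]; apply/inSP; split.
  move=> j; split; first by rewrite ffunE mxf_ge0.
  have /vleP := fl_le T (fun j => proj1 (hb j)).
  by move=> /(_ j) h; exact: le_lt_trans h (proj2 (hb j)).
move=> i iT; apply: contra (hr i iT) => /vltP h; apply/vltP => j.
rewrite ltNge; apply/negP => hij.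
have := @mxf_ub _ (fun c => c <= x j) _ _ (C_r j iT) hij.
by have := h j; rewrite ffunE => h1 /(lt_le_trans h1); rewrite ltxx.
Qed.

Definition cand (T : {set 'I_rho}) : seq pt :=
  [seq [ffun j => nth 0 (C T j) (f j)] | f : {ffun 'I_d -> 'I_rho.+1} <- enum {ffun 'I_d -> 'I_rho.+1}].

Lemma size_C (T : {set 'I_rho}) j : (size (C T j) <= rho.+1)%N.
Proof.
rewrite /= size_map ltnS -cardE.
by have := max_card (mem T); rewrite card_ord.
Qed.

Lemma candP (T : {set 'I_rho}) (x : pt) : (forall j, x j \in C T j) -> x \in cand T.
Proof.
move=> h; apply/mapP.
exists [ffun j => inord (index (x j) (C T j))]; first by rewrite mem_enum.
apply/ffunP => j; rewrite !ffunE inordK ?nth_index //.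
by apply: leq_trans (size_C T j); rewrite index_mem.
Qed.

Lemma cand_C (T : {set 'I_rho}) (x : pt) j : x \in cand T -> x j \in C T j.
Proof.
case/mapP => f _ ->; rewrite ffunE.
case: (ltnP (f j) (size (C T j))) => h; first exact: mem_nth.
by rewrite nth_default // C_0.
Qed.

Lemma sum_eq (u a : pt) : vle u a -> \sum_j a j <= \sum_j u j -> u = a.
Proof.
move=> /vleP h hs; apply/ffunP => j.
have h0 : \sum_j (a j - u j) = 0.
  apply/le_anti/andP; split; first by rewrite sumrB subr_le0.
  by apply: sumr_ge0 => k _; rewrite subr_ge0.
have := @psumr_eq0P _ _ predT (fun k => a k - u k) (fun k _ => etrans (subr_ge0 _ _) (h k)) h0 j isT.
by move/eqP; rewrite subr_eq0 => /eqP.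
Qed.

Lemma exists_gen (T : {set 'I_rho}) (y : pt) : inS T y -> exists2 z, genP T z & vle z y.
Proof.
move=> yS.
have yb : forall j, 0 <= y j by move=> j; case/inSP: yS => h _; case: (h j).
set s := [seq w <- cand T | inS T w && vle w y].
have fs : fl T y \in s.
  by rewrite mem_filter fl_inS // fl_le // candP // => j; exact: fl_C.
have [a] := minseq (fun w : pt => \sum_j w j) fs.
rewrite mem_filter => /andP[/andP[aS ay] _] amin.
exists a => //; split => // v vS va.
have vb : forall j, 0 <= v j by move=> j; case/inSP: vS => h _; case: (h j).
have fv : fl T v \in s.
  rewrite mem_filter fl_inS // candP ?andbT; last by move=> j; exact: fl_C.
  exact: vle_trans (fl_le T vb) (vle_trans va ay).
have e := sum_eq (vle_trans (fl_le T vb) va) (amin _ fv).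
apply: vle_anti => //; rewrite -e; exact: fl_le.
Qed.

Definition genb (T : {set 'I_rho}) (x : pt) :=
  inS T x && all (fun w => inS T w ==> vle w x ==> (w == x)) (cand T).

Lemma gen_cand (T : {set 'I_rho}) (x : pt) : genP T x -> x \in cand T.
Proof.
case=> xS xm.
have xb : forall j, 0 <= x j by move=> j; case/inSP: xS => h _; case: (h j).
have <- := xm _ (fl_inS xS) (fl_le T xb).
by apply: candP => j; exact: fl_C.
Qed.

Lemma genbP (T : {set 'I_rho}) (x : pt) : reflect (genP T x) (genb T x).
Proof.
apply: (iffP andP) => [[xS /allP h]|[xS xm]]; last first.
  by split => //; apply/allP => w _; apply/implyP => wS; apply/implyP => wx; rewrite (xm w wS wx).
split => // v vS vx.
have vb : forall j, 0 <= v j by move=> j; case/inSP: vS => h' _; case: (h' j).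
have fc : fl T v \in cand T by apply: candP => j; exact: fl_C.
have /implyP/(_ (fl_inS vS))/implyP := h _ fc.
move=> /(_ (vle_trans (fl_le T vb) vx)) /eqP e.
by apply: vle_anti => //; rewrite -e; exact: fl_le.
Qed.

Definition G (T : {set 'I_rho}) := undup (filter (genb T) (cand T)).

Lemma memG (T : {set 'I_rho}) (x : pt) : x \in G T <-> genP T x.
Proof.
rewrite mem_undup mem_filter; split => [/andP[/genbP //]|h].
by rewrite gen_cand // andbT; apply/genbP.
Qed.

Lemma G_C (T : {set 'I_rho}) (x : pt) j : x \in G T -> x j \in C T j.
Proof. by rewrite mem_undup mem_filter => /andP[_ /cand_C]. Qed.

End Gen.

Section Step.
Variables (R : realFieldType) (d rho : nat) (r : 'I_rho -> {ffun 'I_d -> R}).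
Hypothesis hd : (0 < d)%N.
Hypothesis adm : admissible r.
Local Notation pt := {ffun 'I_d -> R}.
Let c0 : 'I_d := Ordinal hd.

Lemma r_pos i j : 0 < r i j. Proof. by case: adm => h _; case: (h i j). Qed.
Lemma r_lt1 i j : r i j < 1. Proof. by case: adm => h _; case: (h i j). Qed.
Lemma r_inj i j i' j' : r i j = r i' j' -> i = i' /\ j = j'.
Proof.
case: adm => _ [_ h] e.
by have := h (i, j) (i', j') e; case=> -> ->.
Qed.
Lemma r_incomp i i' : i != i' -> ~~ vle (r i) (r i').
Proof. by case: adm => _ [h _]; exact: h. Qed.

Lemma C_ne (T : {set 'I_rho}) (v : R) j p : v \in C r T j -> p \notin T -> v != r p j.
Proof.
rewrite inE => /orP[/eqP ->|/mapP[i]]; first by rewrite eq_sym gt_eqF // r_pos.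
rewrite mem_enum => iT -> pT; apply/eqP => /r_inj [e _].
by move: pT; rewrite -e iT.
Qed.

Definition upd (x : pt) (j : 'I_d) (v : R) : pt := [ffun k => if k == j then v else x k].

Lemma vle_vlt (x z w : pt) : vle x z -> vlt z w -> vlt x w.
Proof. move=> /vleP h /vltP h2; apply/vltP => j; exact: le_lt_trans (h j) (h2 j). Qed.

Lemma inS_b (T : {set 'I_rho}) (x : pt) j : inS r T x -> 0 <= x j /\ x j < 1.
Proof. by case/inSP. Qed.

Section P.
Variables (T : {set 'I_rho}) (p : 'I_rho).
Hypothesis pT : p \in T.
Hypothesis pmin : forall i, i \in T -> r p c0 <= r i c0.
Let T' := T :\ p.

Lemma ltc i : i \in T' -> r p c0 < r i c0.
Proof.
rewrite inE => /andP[ip iT]; rewrite lt_neqAle pmin // andbT.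
by apply/eqP => /r_inj[e _]; move: ip; rewrite e !inE eqxx.
Qed.

Lemma subS x : inS r T x -> inS r T' x.
Proof.
case/inSP => hb hr; apply/inSP; split => // i; rewrite !inE => /andP[_]; exact: hr.
Qed.

Lemma F1 x : genP r T' x -> ~~ vlt x (r p) -> genP r T x.
Proof.
case=> /inSP[hb hr] xm np; split.
  apply/inSP; split => // i iT; case: (eqVneq i p) => [->//|ip].
  by apply: hr; rewrite !inE ip.
by move=> y /subS yS yx; apply: xm.
Qed.

Lemma F3 x : genP r T' x -> vlt x (r p) -> x c0 = 0.
Proof.
case=> /inSP[hb hr] xm /vltP xp.
have e := xm (upd x c0 0).
have -> : x = upd x c0 0.
  apply/esym/e.
    apply/inSP; split.
      by move=> j; rewrite ffunE; case: ifP => _ //; rewrite lexx ltr01.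
    move=> i iT'; apply: contra (hr i iT') => /vltP h; apply/vltP => j.
    have := h j; rewrite ffunE; case: (eqVneq j c0) => [-> _|//].
    exact: lt_trans (xp c0) (ltc iT').
  apply/vleP => j; rewrite ffunE; case: ifP => _ //; by case: (hb j).
by rewrite ffunE eqxx.
Qed.

Lemma F2 x : genP r T' x -> vlt x (r p) -> genP r T (upd x c0 (r p c0)).
Proof.
move=> xg xp; have [/inSP[hb hr] xm] := xg.
have xz : vle x (upd x c0 (r p c0)).
  apply/vleP => j; rewrite ffunE; case: (eqVneq j c0) => [->|_] //.
  by move/vltP: xp => /(_ c0) /ltW.
split.
  apply/inSP; split.
    move=> j; rewrite ffunE; case: ifP => _ //.
    by rewrite (ltW (r_pos _ _)) r_lt1.
  move=> i iT; case: (eqVneq i p) => [->|ip].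
    by apply/negP => /vltP /(_ c0); rewrite ffunE eqxx ltxx.
  apply: contra (hr i _); last by rewrite !inE ip.
  exact: vle_vlt.
move=> w /inSP[wb wr] /vleP wz.
have wc : w c0 = r p c0.
  apply/le_anti; apply/andP; split; first by have := wz c0; rewrite ffunE eqxx.
  rewrite leNgt; apply/negP => h; have := wr p pT; apply/negP/negPn/vltP => k.
  case: (eqVneq k c0) => [->//|kc].
  have := wz k; rewrite ffunE (negbTE kc) => h1.
  by apply: le_lt_trans h1 _; move/vltP: xp; apply.
have e := xm (upd w c0 (x c0)).
have ew : upd w c0 (x c0) = x.
  apply: e.
    apply/inSP; split.
      by move=> j; rewrite ffunE; case: ifP => _; [exact: hb|exact: wb].
    move=> i iT'; apply/negP => /vltP h.
    have iT : i \in T by move: iT'; rewrite !inE => /andP[].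
    have := wr i iT; apply/negP/negPn/vltP => k.
    case: (eqVneq k c0) => [->|kc]; first by rewrite wc; exact: ltc.
    by have := h k; rewrite ffunE (negbTE kc).
  apply/vleP => k; rewrite ffunE; case: (eqVneq k c0) => [->//|kc].
  by have := wz k; rewrite ffunE (negbTE kc).
apply/ffunP => k; rewrite ffunE; case: (eqVneq k c0) => [->//|kc].
by rewrite -ew ffunE (negbTE kc).
Qed.

Lemma F5 j : j != c0 -> exists z, [/\ genP r T z, z j = r p j &
  forall k, k != j -> z k < r p k].
Proof.
move=> jc.
pose y : pt := [ffun k => if k == j then r p j else mxf (fun c => c < r p k) (C r T k)].
have ylt : forall k, k != j -> y k < r p k.
  move=> k kj; rewrite ffunE (negbTE kj).
  by case: (mxf_P (fun c => c < r p k) (C r T k)) => [->|//]; exact: r_pos.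
have yS : inS r T y.
  apply/inSP; split.
    move=> k; case: (eqVneq k j) => [->|kj].
      by rewrite ffunE eqxx (ltW (r_pos _ _)) r_lt1.
    have := lt_trans (ylt k kj) (r_lt1 p k).
    by rewrite ffunE (negbTE kj) => ->; rewrite mxf_ge0.
  move=> i iT; apply/negP => /vltP h.
  have ip : p != i.
    by apply/eqP => e; have := h j; rewrite ffunE eqxx e ltxx.
  have := r_incomp ip; apply/negP/negPn/vleP => k.
  case: (eqVneq k j) => [->|kj]; first by have := h j; rewrite ffunE eqxx => /ltW.
  rewrite leNgt; apply/negP => hk.
  have := @mxf_ub _ (fun c => c < r p k) _ _ (C_r r k iT) hk.
  by have := h k; rewrite ffunE (negbTE kj) => h1 /(lt_le_trans h1); rewrite ltxx.
have [z [zS zm] /vleP zy] := exists_gen yS.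
have zlt : forall k, k != j -> z k < r p k.
  by move=> k kj; exact: le_lt_trans (zy k) (ylt k kj).
exists z; split => //.
apply/le_anti/andP; split; first by have := zy j; rewrite ffunE eqxx.
rewrite leNgt; apply/negP => h.
move/inSP: zS => [_ /(_ p pT)]; apply/negP/negPn/vltP => k.
by case: (eqVneq k j) => [->//|kj]; exact: zlt.
Qed.

Lemma step : (size (G r T') + (d - 1) <= size (G r T))%N.
Proof.
pose f (x : pt) := if vlt x (r p) then upd x c0 (r p c0) else x.
pose Pz j (x : pt) := (x j == r p j) && [forall k, (k != j) ==> (x k < r p k)].
pose zf j := nth 0 (G r T) (find (Pz j) (G r T)).
have hasz : forall j, j != c0 -> has (Pz j) (G r T).
  move=> j jc; have [z [zg zj zl]] := F5 jc.
  apply/hasP; exists z; first by apply/memG.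
  rewrite /Pz zj eqxx /=; apply/forallP => k; apply/implyP; exact: zl.
have Pzf : forall j, j != c0 -> Pz j (zf j) by move=> j jc; apply: nth_find; exact: hasz.
have zfG : forall j, j != c0 -> zf j \in G r T.
  by move=> j jc; apply: mem_nth; rewrite -has_find; exact: hasz.
have F4 : forall x j, x \in G r T' -> x j != r p j.
  move=> x j xG; apply: C_ne (G_C j xG) _; by rewrite !inE eqxx.
pose L := map f (G r T') ++ map zf (enum (predC1 c0)).
have Lsub : {subset L <= G r T}.
  move=> x; rewrite mem_cat => /orP[/mapP[y yG ->]|/mapP[j]].
    have yg := (memG _ _ _).1 yG; rewrite /f; apply/memG.
    by case: ifP => h; [exact: F2|apply: F1 => //; rewrite h].
  by rewrite mem_enum => jc ->; exact: zfG.
have Luniq : uniq L.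
  rewrite cat_uniq; apply/and3P; split.
  - rewrite map_inj_in_uniq ?undup_uniq // => x y xG yG.
    have xg := (memG _ _ _).1 xG; have yg := (memG _ _ _).1 yG.
    rewrite /f; case: ifP => hx; case: ifP => hy.
    + move=> e; apply/ffunP => k; case: (eqVneq k c0) => [->|kc].
        by rewrite (F3 xg hx) (F3 yg hy).
      by move/ffunP: e => /(_ k); rewrite !ffunE (negbTE kc).
    + move=> e; have := F4 y c0 yG; rewrite -e ffunE eqxx eqxx //.
    + move=> e; have := F4 x c0 xG; rewrite e ffunE eqxx eqxx //.
    + by [].
  - apply/hasPn => x /mapP[j]; rewrite mem_enum => jc ->.
    apply/negP => /mapP[y yG e].
    have /andP[/eqP h1 _] := Pzf j jc.
    move: h1; rewrite e /f; case: ifP => hy.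
      rewrite ffunE (negbTE jc) => h1; move/vltP: hy => /(_ j).
      by rewrite h1 ltxx.
    by move=> h1; have := F4 y j yG; rewrite h1 eqxx.
  - rewrite map_inj_in_uniq ?enum_uniq // => j j'; rewrite !mem_enum => jc jc' e.
    apply/eqP; apply/negP => /negP jj.
    have /andP[_ /forallP /(_ j') /implyP] := Pzf j jc.
    have /andP[/eqP h _] := Pzf j' jc'.
    by rewrite eq_sym jj e h ltxx => /(_ isT).
have := uniq_leq_size Luniq Lsub.
by rewrite size_cat !size_map -cardE cardC1 card_ord subn1.
Qed.

End P.

Lemma lower n (T : {set 'I_rho}) : #|T| = n -> ((d - 1) * n + 1 <= size (G r T))%N.
Proof.
elim: n T => [|n IH] T hT.
  have yS : inS r T [ffun _ => 0].
    apply/inSP; split.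
      by move=> j; rewrite ffunE lexx ltr01.
    by move=> i; move/eqP: hT; rewrite cards_eq0 => /eqP ->; rewrite inE.
  have [z zg _] := exists_gen yS.
  rewrite muln0 add0n; move/memG: zg; case: (G r T) => //.
have [i0 i0T] : exists i0, i0 \in T.
  by apply/set0Pn; rewrite -card_gt0 hT.
have [p] := @minseq _ _ (fun i => r i c0) (enum T) i0 ltac:(by rewrite mem_enum).
rewrite mem_enum => pT pmin.
have pm : forall i, i \in T -> r p c0 <= r i c0 by move=> i iT; apply: pmin; rewrite mem_enum.
have hT' : #|T :\ p| = n by move: hT; rewrite (cardsD1 p) pT add1n => -[].
have := IH _ hT'; have := step pT pm; rewrite mulnS; lia.
Qed.

End Step.

Lemma in_regionE (R : realFieldType) d rho (r : 'I_rho -> {ffun 'I_d -> R}) x :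
  in_region r x = inS r setT x.
Proof.
rewrite /in_region /inS; congr (_ && _); apply: eq_forallb => i; by rewrite in_setT.
Qed.

Lemma is_genE (R : realFieldType) d rho (r : 'I_rho -> {ffun 'I_d -> R}) x :
  is_generator r x <-> genP r setT x.
Proof.
rewrite /is_generator /genP in_regionE; split => -[h1 h2]; split => // y.
  by rewrite -in_regionE; exact: h2.
by rewrite in_regionE; exact: h2.
Qed.

Section Constr.
Variables (R : realFieldType) (d rho : nat).
Hypothesis hd : (0 < d)%N.
Local Notation pt := {ffun 'I_d -> R}.
Let c0 : 'I_d := Ordinal hd.
Let M := (rho + rho * d).+1%N.
Definition cv (n : nat) : R := n%:R / M%:R.

Lemma Mpos : 0 < (M%:R : R). Proof. by rewrite ltr0n. Qed.
Lemma cv_lt m n : (cv m < cv n) = (m < n)%N.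
Proof. by rewrite /cv ltr_pM2r ?invr_gt0 ?Mpos // ltr_nat. Qed.
Lemma cv_le m n : (cv m <= cv n) = (m <= n)%N.
Proof. by rewrite /cv ler_pM2r ?invr_gt0 ?Mpos // ler_nat. Qed.
Lemma cv_inj m n : cv m = cv n -> m = n.
Proof. by move=> e; apply/eqP; rewrite eqn_leq -!cv_le e lexx. Qed.
Lemma cv_M : cv M = 1.
Proof. by rewrite /cv divff // gt_eqF // Mpos. Qed.
Lemma cv_0 : cv 0 = 0.
Proof. by rewrite /cv mul0r. Qed.

Definition kk (i : 'I_rho) (j : 'I_d) : nat :=
  if j == c0 then (rho - i)%N else (rho + i * d + j)%N.

Lemma kk_lt i j : (0 < kk i j < M)%N.
Proof.
rewrite /kk /M; case: ifP => _; have := ltn_ord i; have := ltn_ord j; first lia.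
move=> hj hi; apply/andP; split; first lia.
have : (i * d + j < rho * d)%N.
  apply: (@leq_trans (i.+1 * d)); first by rewrite mulSn; lia.
  by rewrite leq_mul2r hi orbT.
lia.
Qed.

Lemma kk_inj i j i' j' : kk i j = kk i' j' -> i = i' /\ j = j'.
Proof.
have hi := ltn_ord i; have hi' := ltn_ord i'; have hj := ltn_ord j; have hj' := ltn_ord j'.
rewrite /kk; case: (eqVneq j c0) => [->|jc]; case: (eqVneq j' c0) => [->|jc'].
- by move=> e; split => //; apply: val_inj => /=; lia.
- have : (0 < j')%N by rewrite lt0n; apply: contra jc' => /eqP e; apply/eqP/val_inj.
  lia.
- have : (0 < j)%N by rewrite lt0n; apply: contra jc => /eqP e; apply/eqP/val_inj.
  lia.
- have j0 : val j != 0%N by apply: contra jc => /eqP e; apply/eqP/val_inj.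
  have j0' : val j' != 0%N by apply: contra jc' => /eqP e; apply/eqP/val_inj.
  move=> e; have e2 : (i * d + j = i' * d + j')%N by lia.
  have ei : nat_of_ord i = i'.
    have := congr1 (divn^~ d) e2.
    by rewrite !divnMDl // !divn_small // !addn0.
  split; apply: val_inj => //=; move: e2; rewrite ei; lia.
Qed.

Definition rr (i : 'I_rho) : pt := [ffun j => cv (kk i j)].
Definition aa (t : nat) : R := cv (rho - t)%N.

Lemma rr_c0 i : rr i c0 = aa i.
Proof. by rewrite /rr ffunE /kk eqxx. Qed.
Lemma rr_pos i j : 0 < rr i j.
Proof. by rewrite ffunE -cv_0 cv_lt; case/andP: (kk_lt i j). Qed.
Lemma rr_lt1 i j : rr i j < 1.
Proof. by rewrite ffunE -cv_M cv_lt; case/andP: (kk_lt i j). Qed.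
Lemma rr_inc i i' j : j != c0 -> (rr i j < rr i' j) = (i < i')%N.
Proof.
move=> jc; rewrite !ffunE cv_lt /kk (negbTE jc) ltn_add2r ltn_add2l ltn_pmul2r //.
Qed.
Lemma rr_incle i i' j : j != c0 -> (rr i j <= rr i' j) = (i <= i')%N.
Proof.
move=> jc; rewrite !ffunE cv_le /kk (negbTE jc) leq_add2r leq_add2l leq_pmul2r //.
Qed.
Lemma aa_le t t' : (t <= t')%N -> aa t' <= aa t.
Proof. by move=> h; rewrite cv_le; lia. Qed.
Lemma aa_ge0 t : 0 <= aa t.
Proof. by rewrite -cv_0 cv_le. Qed.
Lemma aa_lt1 t : aa t < 1.
Proof. by rewrite -cv_M cv_lt /M; lia. Qed.

Lemma rr_adm : (1 < d)%N \/ (rho <= 1)%N -> admissible rr.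
Proof.
move=> h; split; first by move=> i j; rewrite rr_pos rr_lt1.
split; last first.
  by move=> [i j] [i' j'] /=; rewrite !ffunE => /cv_inj/kk_inj [-> ->].
move=> i i' ii; apply/negP => /vleP hle.
case: (ltngtP i i') => [lt|gt|/val_inj e]; last by rewrite e eqxx in ii.
  have := hle c0; rewrite !rr_c0 cv_le; have := ltn_ord i'; lia.
case: h => [d2|r1]; last by have := ltn_ord i; have := ltn_ord i'; lia.
have c1 : Ordinal d2 != c0 by [].
by have := hle (Ordinal d2); rewrite rr_incle // leqNgt gt.
Qed.

Definition ee (i : 'I_rho) (j : 'I_d) : pt :=
  [ffun k => if k == j then rr i j else if k == c0 then aa i.+1 else 0].
Definition top : pt := [ffun k => if k == c0 then aa 0 else 0].

Lemma ee_S i j : j != c0 -> inS rr setT (ee i j).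
Proof.
move=> jc; apply/inSP; split.
  move=> k; rewrite ffunE; case: ifP => _; first by rewrite (ltW (rr_pos _ _)) rr_lt1.
  case: ifP => _; first by rewrite aa_ge0 aa_lt1.
  by rewrite lexx ltr01.
move=> l _; apply/negP => /vltP h.
case: (leqP l i) => li.
  by have := h j; rewrite ffunE eqxx rr_inc // ltnNge li.
have := h c0; rewrite ffunE eq_sym (negbTE jc) eqxx rr_c0 cv_lt.
have := ltn_ord l; lia.
Qed.

Lemma ee_gen i j : j != c0 -> genP rr setT (ee i j).
Proof.
move=> jc; split; first exact: ee_S.
move=> w /inSP[wb wr] /vleP wle.
have wk : forall k, k != j -> k != c0 -> w k = 0.
  move=> k kj kc; apply/le_anti; rewrite (proj1 (wb k)) andbT.
  by have := wle k; rewrite ffunE (negbTE kj) (negbTE kc).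
have wc : w c0 = aa i.+1.
  apply/le_anti; apply/andP; split.
    by have := wle c0; rewrite ffunE eq_sym (negbTE jc) eqxx.
  rewrite leNgt; apply/negP => hw.
  have li : (i.+1 < rho)%N.
    rewrite ltnNge; apply/negP => hr; move: hw.
    by rewrite /aa (_ : rho - i.+1 = 0)%N ?cv_0 ?ltNge ?(proj1 (wb c0)) //; lia.
  have := wr (Ordinal li) (in_setT _); apply/negP/negPn/vltP => k.
  case: (eqVneq k c0) => [->|kc]; first by rewrite rr_c0.
  case: (eqVneq k j) => [->|kj]; last by rewrite wk // rr_pos.
  have := wle j; rewrite ffunE eqxx => h1; apply: le_lt_trans h1 _.
  by rewrite rr_inc.
have wj : w j = rr i j.
  apply/le_anti; apply/andP; split; first by have := wle j; rewrite ffunE eqxx.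
  rewrite leNgt; apply/negP => hw.
  have := wr i (in_setT _); apply/negP/negPn/vltP => k.
  case: (eqVneq k c0) => [->|kc].
    by rewrite wc rr_c0 cv_lt; have := ltn_ord i; lia.
  case: (eqVneq k j) => [->//|kj]; by rewrite wk // rr_pos.
apply/ffunP => k; rewrite ffunE; case: (eqVneq k j) => [->//|kj].
by case: (eqVneq k c0) => [->//|kc]; rewrite wk.
Qed.

Lemma top_gen : genP rr setT top.
Proof.
split.
  apply/inSP; split.
    by move=> k; rewrite ffunE; case: ifP => _; rewrite ?aa_ge0 ?aa_lt1 ?lexx ?ltr01.
  move=> l _; apply/negP => /vltP /(_ c0); rewrite ffunE eqxx rr_c0 cv_lt; lia.
move=> w /inSP[wb wr] /vleP wle.
have wk : forall k, k != c0 -> w k = 0.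
  move=> k kc; apply/le_anti; rewrite (proj1 (wb k)) andbT.
  by have := wle k; rewrite ffunE (negbTE kc).
have wc : w c0 = aa 0.
  apply/le_anti; apply/andP; split; first by have := wle c0; rewrite ffunE eqxx.
  rewrite leNgt; apply/negP => hw.
  have r0 : (0 < rho)%N.
    rewrite lt0n; apply/negP => /eqP r0; move: hw.
    by rewrite /aa r0 cv_0 ltNge (proj1 (wb c0)).
  have := wr (Ordinal r0) (in_setT _); apply/negP/negPn/vltP => k.
  case: (eqVneq k c0) => [->|kc]; first by rewrite rr_c0.
  by rewrite wk // rr_pos.
apply/ffunP => k; rewrite ffunE; case: (eqVneq k c0) => [->//|kc]; by rewrite wk.
Qed.

Lemma find_t y : 0 <= y -> y < aa 0 -> exists t : 'I_rho, aa t.+1 <= y /\ y < aa t.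
Proof.
move=> y0.
suff H : forall n, (n <= rho)%N -> y < aa (rho - n) ->
    exists t : 'I_rho, aa t.+1 <= y /\ y < aa t.
  by move=> h; apply: (H rho) => //; rewrite subnn.
elim=> [|n IH] hn.
  by rewrite subn0 /aa subnn cv_0 ltNge y0.
move=> hy; case: (ltP y (aa (rho - n))) => h; first by apply: IH => //; lia.
have lt : (rho - n.+1 < rho)%N by lia.
exists (Ordinal lt) => /=; split => //.
by rewrite (_ : (rho - n.+1).+1 = rho - n)%N //; lia.
Qed.

Lemma classify x : genP rr setT x ->
  x = top \/ exists i j, j != c0 /\ x = ee i j.
Proof.
move=> [xS xm]; have [xb xr] := inSP _ _ _ xS.
case: (leP (aa 0) (x c0)) => h.
  left; apply/esym/xm; first by case: top_gen.
  apply/vleP => k; rewrite ffunE; case: ifP => [/eqP ->//|_]; exact: (proj1 (xb k)).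
have [t [ht1 ht2]] := find_t (proj1 (xb c0)) h.
have := xr t (in_setT _); rewrite negb_forall => /existsP[k]; rewrite -leNgt => hk.
have kc : k != c0 by apply/eqP => e; move: hk; rewrite e rr_c0 leNgt ht2.
right; exists t, k; split => //; apply/esym/xm; first by case: (ee_gen t kc).
apply/vleP => l; rewrite ffunE; case: (eqVneq l k) => [->//|lk].
by case: (eqVneq l c0) => [->//|lc]; exact: (proj1 (xb l)).
Qed.

Definition GL : seq pt :=
  top :: [seq ee p.1 p.2 | p <- enum (setX [set: 'I_rho] [set~ c0])].

Lemma GL_num : num_generators rr ((d - 1) * rho + 1)%N.
Proof.
exists GL; split.
- rewrite /GL /=; apply/andP; split.
    apply/mapP => -[[i j]]; rewrite mem_enum in_setX !inE /= => jc.
    move/ffunP => /(_ j); rewrite !ffunE eqxx (negbTE jc) => e.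
    by have := rr_pos i j; rewrite ffunE -e ltxx.
  rewrite map_inj_in_uniq ?enum_uniq // => -[i j] [i' j'].
  rewrite !mem_enum !in_setX !inE /= => jc jc' /ffunP e.
  case: (eqVneq j j') => [ejj|jj].
    move: (e j); rewrite !ffunE -ejj eqxx => /cv_inj/kk_inj[-> _]; by rewrite ejj.
  move: (e j); rewrite !ffunE eqxx (negbTE jj) (negbTE jc) => h.
  by have := rr_pos i j; rewrite ffunE h ltxx.
- move=> x; rewrite is_genE; split.
    rewrite inE => /orP[/eqP ->|/mapP[[i j]]]; first exact: top_gen.
    by rewrite mem_enum in_setX !inE /= => jc ->; exact: ee_gen.
  move/classify => [->|[i [j [jc ->]]]]; first exact: mem_head.
  rewrite inE; apply/orP; right; apply/mapP; exists (i, j) => //.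
  by rewrite mem_enum in_setX !inE.
- by rewrite /= size_map -cardE cardsX cardsT cardsC1 !card_ord subn1 mulnC addn1.
Qed.

End Constr.

Lemma adm_d1 (R : realFieldType) d rho (hd : (0 < d)%N) (r : 'I_rho -> {ffun 'I_d -> R}) :
  admissible r -> (1 < d)%N \/ (rho <= 1)%N.
Proof.
move=> [_ [hinc _]].
case: (ltnP 1 d) => [h|h]; first by left.
right; rewrite leqNgt; apply/negP => hr.
have r0 : (0 < rho)%N by lia.
pose i0 : 'I_rho := Ordinal r0; pose i1 : 'I_rho := Ordinal hr.
have ne : i0 != i1 by [].
have allc : forall j : 'I_d, j = Ordinal hd.
  by move=> j; apply: val_inj => /=; have := ltn_ord j; lia.
case/orP: (le_total (r i0 (Ordinal hd)) (r i1 (Ordinal hd))) => hle.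
  move/negP: (hinc _ _ ne); apply; apply/vleP => j; by rewrite (allc j).
have ne' : i1 != i0 by [].
move/negP: (hinc _ _ ne'); apply; apply/vleP => j; by rewrite (allc j).
Qed.

Theorem theoremT (R : realFieldType) (d rho : nat) (hd : (0 < d)%N) :
  (forall r : 'I_rho -> {ffun 'I_d -> R}, admissible r ->
     exists g : nat, num_generators r g /\ ((d - 1) * rho + 1 <= g)%N) /\
  ((exists r : 'I_rho -> {ffun 'I_d -> R}, admissible r) ->
     exists r : 'I_rho -> {ffun 'I_d -> R},
       admissible r /\ num_generators r ((d - 1) * rho + 1)%N).
Proof.
split.
  move=> r adm; exists (size (G r setT)); split.
    exists (G r setT); split => //; first exact: undup_uniq.
    by move=> x; rewrite is_genE; exact: memG.
  by apply: (lower hd adm); rewrite cardsT card_ord.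
move=> [r0 adm0]; exists (rr R hd); split.
  exact: rr_adm (adm_d1 hd adm0).
exact: GL_num.
Qed.
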